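(* Let $\ket{W_4}=\frac12(|1000\rangle+|0100\rangle+|0010\rangle+|0001\rangle)$ and let $\mathcal G_{VI}$ be the graph on $\{A,B,C,D\}$ with edges $AB,AC,AD,BD$. Then $$\frac{3+\sqrt3}{6}\le P(W_4,\mathcal G_{VI}).$$
   Context: $P(\psi,\mathcal G)$: for a graph $\mathcal G=(V,E)$ on the four parties $A,B,C,D$ (each holding one qubit), the supremum over all LOCC protocols (local operations and classical communication, allowing arbitrarily many rounds) acting on a single copy of $\psi$ of $\sum_{(i,j)\in E}p_{ij}$, where $p_{ij}$ is the probability that the protocol ends with parties $i,j$ sharing a state local-unitarily equivalent to $\frac1{\sqrt2}(|00\rangle+|11\rangle)$ and all other parties in a product state. *)

(* Defs.v *)
From HB Require Import structures.
From mathcomp Require Import all_boot all_order all_algebra all_field.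
Set Implicit Arguments. Unset Strict Implicit. Unset Printing Implicit Defensive.
Import Order.TTheory GRing.Theory Num.Theory.
Local Open Scope ring_scope.

(* Parties A,B,C,D are 0,1,2,3 : 'I_4; computational basis of (C^2)^{⊗4}
   is indexed by x : {ffun 'I_4 -> 'I_2}; a (possibly unnormalized) pure
   state is a function from basis indices to complex amplitudes. *)
Definition qidx := {ffun 'I_4 -> 'I_2}.
Definition qstate := qidx -> algC.

Definition upd (x : qidx) (i : 'I_4) (c : 'I_2) : qidx :=
  [ffun k => if k == i then c else x k].

Definition apply_local (K : 'M[algC]_2) (i : 'I_4) (phi : qstate) : qstate :=
  fun x => \sum_(c < 2) K (x i) c * phi (upd x i c).

Definition adjmx (A : 'M[algC]_2) : 'M[algC]_2 := (map_mx (fun z => z^*) A)^T.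
Definition unitary2 (U : 'M[algC]_2) : Prop := U *m adjmx U = 1%:M.

Definition norm2 (phi : qstate) : algC := \sum_(x : qidx) `|phi x| ^+ 2.

(* phi is (up to normalisation) a state in which parties i,j share a state
   LU-equivalent to (|00>+|11>)/sqrt2 and every other party is in a product
   state: phi = (U (x) V)|Phi+>_{ij} (x) (product of single-qubit vectors f k). *)
Definition bell_prod (i j : 'I_4) (phi : qstate) : Prop :=
  exists (U V : 'M[algC]_2) (f : 'I_4 -> 'I_2 -> algC),
    unitary2 U /\ unitary2 V /\
    forall x : qidx,
      phi x = (\sum_(c < 2) U (x i) c * V (x j) c)
              * \prod_(k < 4 | (k != i) && (k != j)) f k (x k).

(* Finite-round LOCC protocols on single-qubit parties, as classical decision
   trees: at each node one party performs a local measurement with Kraus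
   operators K_1..K_m (outcome broadcast), and the protocol continues with the
   subtree of the outcome.  Leaves are labelled with the edge (if any) whose
   success they claim. *)
Inductive locc : Type :=
| Stop of option ('I_4 * 'I_4)
| Meas of 'I_4 & seq ('M[algC]_2 * locc).

Fixpoint valid (G : seq ('I_4 * 'I_4)) (p : locc) (phi : qstate) : Prop :=
  match p with
  | Stop None => True
  | Stop (Some e) => e \in G /\ bell_prod e.1 e.2 phi
  | Meas i br =>
      \sum_(b <- br) (adjmx b.1 *m b.1) = 1%:M /\
      (fix vl (l : seq ('M[algC]_2 * locc)) : Prop :=
         match l with
         | [::] => True
         | (K, q) :: l' => valid G q (apply_local K i phi) /\ vl l'
         end) br
  end.

(* total success probability: sum over claimed-successful leaves of the
   squared norm of the (unnormalized) branch state *)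
Fixpoint value (p : locc) (phi : qstate) : algC :=
  match p with
  | Stop None => 0
  | Stop (Some _) => norm2 phi
  | Meas i br =>
      (fix vl (l : seq ('M[algC]_2 * locc)) : algC :=
         match l with
         | [::] => 0
         | (K, q) :: l' => value q (apply_local K i phi) + vl l'
         end) br
  end.

Definition W4 : qstate :=
  fun x => if (\sum_(k < 4) (x k : nat) == 1)%N then 2^-1 else 0.

Definition pA : 'I_4 := @Ordinal 4 0 isT.
Definition pB : 'I_4 := @Ordinal 4 1 isT.
Definition pC : 'I_4 := @Ordinal 4 2 isT.
Definition pD : 'I_4 := @Ordinal 4 3 isT.

Definition G_VI : seq ('I_4 * 'I_4) := [:: (pA, pB); (pA, pC); (pA, pD); (pB, pD)].

(* Main.v *)
Require Import Defs.
From HB Require Import structures.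
From mathcomp Require Import all_boot all_order all_algebra all_field.
From mathcomp Require Import ring lra zify.
From Stdlib Require Import FunctionalExtensionality.
Import Order.TTheory GRing.Theory Num.Theory.
Local Open Scope ring_scope.
Set Implicit Arguments. Unset Strict Implicit. Unset Printing Implicit Defensive.

Definition o0 : 'I_2 := @Ordinal 2 0 isT.
Definition o1 : 'I_2 := @Ordinal 2 1 isT.

Lemma ord2P (r : 'I_2) : r = o0 \/ r = o1.
Proof. case: r => [[|[|n]] Hn]; [left|right|by []]; exact: val_inj. Qed.

Definition e (k : 'I_4) : qidx := [ffun m => if m == k then o1 else o0].

Lemma e_inj k m : (e k == e m) = (k == m).
Proof.
apply/eqP/eqP => [H|->//]; have := congr1 (fun f : qidx => f k) H.
by rewrite !ffunE eqxx; case: (k == m) /eqP.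
Qed.

Definition Wst (a : 'I_4 -> algC) : qstate := fun x => \sum_(k < 4) (x == e k)%:R * a k.

Lemma Wst_e a k : Wst a (e k) = a k.
Proof.
rewrite /Wst (bigD1 k) //= eqxx mul1r big1 ?addr0 // => m /negbTE.
by rewrite e_inj eq_sym => ->; rewrite mul0r.
Qed.

Lemma Wst_ne a x : (forall k, x != e k) -> Wst a x = 0.
Proof. by move=> H; rewrite /Wst big1 // => k _; rewrite (negbTE (H k)) mul0r. Qed.

Lemma xcase (x : qidx) : (exists k, x = e k) \/ (forall k, x != e k).
Proof.
case: (pickP (fun k => x == e k)) => [k /eqP ->|H]; first by left; exists k.
by right => k; rewrite H.
Qed.

Lemma Wst_ext a b : a =1 b -> Wst a = Wst b.
Proof. by move=> H; apply: functional_extensionality => x; rewrite /Wst; apply: eq_bigr => k _; rewrite H. Qed.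

Definition dmx (d0 d1 : algC) : 'M[algC]_2 :=
  \matrix_(r, c) if r == c then (if r == o0 then d0 else d1) else 0.

Lemma upd_id (x : qidx) i : upd x i (x i) = x.
Proof. by apply/ffunP => k; rewrite ffunE; case: eqP => // ->. Qed.

Lemma apply_dmx d0 d1 i a :
  apply_local (dmx d0 d1) i (Wst a) = Wst (fun k => (if k == i then d1 else d0) * a k).
Proof.
apply: functional_extensionality => x; rewrite /apply_local.
rewrite (bigD1 (x i)) //= big1; last first.
  by move=> c /negbTE; rewrite mxE eq_sym => ->; rewrite mul0r.
rewrite addr0 upd_id mxE eqxx.
case: (xcase x) => [[k ->]|H]; last by rewrite !Wst_ne // mulr0.
rewrite !Wst_e ffunE; case: (i == k) /eqP => [->|]; first by rewrite eqxx.
by move=> /eqP; rewrite eq_sym => /negbTE ->.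
Qed.

Lemma norm2_Wst a : norm2 (Wst a) = \sum_(k < 4) `|a k| ^+ 2.
Proof.
rewrite /norm2.
have H : forall x, `|Wst a x| ^+ 2 = Wst (fun k => `|a k| ^+ 2) x.
  move=> x; case: (xcase x) => [[k ->]|H]; first by rewrite !Wst_e.
  by rewrite !Wst_ne // normr0 expr0n.
under eq_bigr do rewrite H.
rewrite /Wst exchange_big /=; apply: eq_bigr => k _.
rewrite -big_distrl /= (bigD1 (e k)) //= eqxx big1 ?addr0 ?mul1r // => y /negbTE ->.
by [].
Qed.


Lemma eP (x : qidx) k : (x == e k) = (x k == o1) && [forall m, (m != k) ==> (x m == o0)].
Proof.
apply/eqP/andP => [->|[/eqP H1 /forallP H2]].
  rewrite ffunE eqxx; split => //; apply/forallP => m; apply/implyP => /negbTE.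
  by rewrite ffunE => ->.
apply/ffunP => m; rewrite ffunE; case: eqP => [->//|/eqP Hm].
by apply/eqP; have := H2 m; rewrite Hm.
Qed.

Lemma prod_bool (P : pred 'I_4) (b : 'I_4 -> bool) :
  (\prod_(k < 4 | P k) (b k : nat) = [forall k, P k ==> b k])%N.
Proof.
case: (boolP [forall k, P k ==> b k]) => [/forallP H|/forallP H].
  by rewrite big1 // => k Pk; have := H k; rewrite Pk /= => ->.
have [k] : exists k, ~~ (P k ==> b k).
  by apply/existsP; rewrite -negb_forall; apply/negP => /forallP.
rewrite negb_imply => /andP [Pk /negbTE bk].
by rewrite (bigD1 k) //= bk.
Qed.

Lemma bool_id (x : qidx) i j : i != j ->
  ((x == e i) + (x == e j))%N =
  ((x i != x j) && [forall k, ((k != i) && (k != j)) ==> (x k == o0)] : nat).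
Proof.
move=> hij.
have hji : (j == i) = false by rewrite eq_sym (negbTE hij).
have hij' : (i == j) = false by rewrite (negbTE hij).
case: (xcase x) => [[k ->]|H].
  rewrite !e_inj !ffunE.
  case: (k =P i) => [->|/eqP ki].
    rewrite eqxx ?hij' ?hji /=.
    have -> : [forall k0, (k0 != i) && (k0 != j) ==> (e i k0 == o0)] = true.
      by apply/forallP => m; apply/implyP => /andP [/negbTE h _]; rewrite ffunE h.
    by [].
  case: (k =P j) => [->|/eqP kj].
    rewrite eqxx ?hij' ?hji /=.
    have -> : [forall k0, (k0 != i) && (k0 != j) ==> (e j k0 == o0)] = true.
      by apply/forallP => m; apply/implyP => /andP [_ /negbTE h]; rewrite ffunE h.
    by [].
  have e1 : (i == k) = false by rewrite eq_sym (negbTE ki).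
  have e2 : (j == k) = false by rewrite eq_sym (negbTE kj).
  by rewrite ?e1 ?e2 ?(negbTE ki) ?(negbTE kj).
have h1 := H i; have h2 := H j; rewrite (negbTE h1) (negbTE h2) /=.
case: (boolP (x i != x j)) => //= hx; case: (boolP [forall _, _]) => //= /forallP hf.
exfalso.
case: (ord2P (x i)) => xi.
  have xj : x j = o1 by case: (ord2P (x j)) => // xj; move: hx; rewrite xi xj.
  move: h2; rewrite eP xj eqxx /=; apply/negP/negPn/forallP => m; apply/implyP => hm.
  case: (m =P i) => [->|/eqP mi]; first by rewrite xi.
  by have := hf m; rewrite mi hm.
move: h1; rewrite eP xi eqxx /=; apply/negP/negPn/forallP => m; apply/implyP => hm.
case: (m =P j) => [->|/eqP mj]; last by have := hf m; rewrite mj hm.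
by case: (ord2P (x j)) hx => ->; rewrite xi.
Qed.

Lemma kraus2 a b c d :
  a^* * a + c^* * c = 1 -> b^* * b + d^* * d = 1 ->
  adjmx (dmx a b) *m dmx a b + adjmx (dmx c d) *m dmx c d = 1%:M.
Proof.
move=> H1 H2; apply/matrixP => r s.
rewrite !mxE !big_ord_recl !big_ord0 !mxE.
case: (ord2P r) => ->; case: (ord2P s) => -> /=. all: rewrite ?conjC0 ?mul0r ?mulr0 ?addr0 ?add0r. all: try done.
Qed.

Definition Xmx : 'M[algC]_2 := \matrix_(r, c) (r != c)%:R.

Lemma unitary_X : unitary2 Xmx.
Proof.
rewrite /unitary2; apply/matrixP => r s.
rewrite !mxE !big_ord_recl !big_ord0 !mxE.
by case: (ord2P r) => ->; case: (ord2P s) => -> /=; rewrite ?conjC0 ?conjC1 ?mul0r ?mulr0 ?addr0 ?add0r ?mulr1.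
Qed.

Lemma unitary_1 : unitary2 1%:M.
Proof.
rewrite /unitary2; apply/matrixP => r s.
rewrite !mxE !big_ord_recl !big_ord0 !mxE.
by case: (ord2P r) => ->; case: (ord2P s) => -> /=; rewrite ?conjC0 ?conjC1 ?mul0r ?mulr0 ?addr0 ?add0r ?mulr1.
Qed.

Lemma bell_gen i j a g : i != j ->
  #|[pred k : 'I_4 | (k != i) && (k != j)]| = 2%N ->
  a i = g -> a j = g -> (forall k, k != i -> k != j -> a k = 0) ->
  bell_prod i j (Wst a).
Proof.
move=> hij hc hi hj ho.
exists Xmx, 1%:M, (fun k b => (b == o0)%:R * sqrtC g).
split; first exact: unitary_X. split; first exact: unitary_1.
move=> x.
have -> : \sum_(c < 2) Xmx (x i) c * (1%:M : 'M[algC]_2) (x j) c = (x i != x j)%:R.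
  rewrite (bigD1 (x j)) //= big1; first by rewrite !mxE eqxx mulr1 addr0.
  by move=> c Hc; rewrite !mxE [x j == c]eq_sym (negbTE Hc) mulr0.
rewrite big_split /= prodr_const hc sqrtCK.
have -> : Wst a x = ((x == e i)%:R + (x == e j)%:R) * g.
  rewrite /Wst (bigD1 i) //= (bigD1 j) /=; last by rewrite eq_sym.
  rewrite big1 ?addr0; first by rewrite hi hj mulrDl.
  by move=> k /andP [hk1 hk2]; rewrite ho ?mulr0.
rewrite mulrA; congr (_ * _).
rewrite -natr_prod -natrM -natrD; congr (_%:R).
rewrite prod_bool bool_id //; by case: (_ != _); case: [forall _, _].
Qed.


Definition amp4 (a b c d : algC) : 'I_4 -> algC :=
  fun k => if k == pA then a else if k == pB then b else if k == pC then c else d.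

Lemma ord4P (P : 'I_4 -> Prop) : P pA -> P pB -> P pC -> P pD -> forall k, P k.
Proof.
move=> hA hB hC hD [[|[|[|[|n]]]] Hk].
- by rewrite (_ : Ordinal Hk = pA) //; apply: val_inj.
- by rewrite (_ : Ordinal Hk = pB) //; apply: val_inj.
- by rewrite (_ : Ordinal Hk = pC) //; apply: val_inj.
- by rewrite (_ : Ordinal Hk = pD) //; apply: val_inj.
- by [].
Qed.

Lemma appA d0 d1 a b c d : apply_local (dmx d0 d1) pA (Wst (amp4 a b c d)) =
  Wst (amp4 (d1 * a) (d0 * b) (d0 * c) (d0 * d)).
Proof. by rewrite apply_dmx; apply: Wst_ext; apply: ord4P. Qed.
Lemma appB d0 d1 a b c d : apply_local (dmx d0 d1) pB (Wst (amp4 a b c d)) =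
  Wst (amp4 (d0 * a) (d1 * b) (d0 * c) (d0 * d)).
Proof. by rewrite apply_dmx; apply: Wst_ext; apply: ord4P. Qed.
Lemma appC d0 d1 a b c d : apply_local (dmx d0 d1) pC (Wst (amp4 a b c d)) =
  Wst (amp4 (d0 * a) (d0 * b) (d1 * c) (d0 * d)).
Proof. by rewrite apply_dmx; apply: Wst_ext; apply: ord4P. Qed.
Lemma appD d0 d1 a b c d : apply_local (dmx d0 d1) pD (Wst (amp4 a b c d)) =
  Wst (amp4 (d0 * a) (d0 * b) (d0 * c) (d1 * d)).
Proof. by rewrite apply_dmx; apply: Wst_ext; apply: ord4P. Qed.

Lemma norm2_amp4 a b c d : norm2 (Wst (amp4 a b c d)) =
  `|a| ^+ 2 + `|b| ^+ 2 + `|c| ^+ 2 + `|d| ^+ 2.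
Proof. by rewrite norm2_Wst !big_ord_recl big_ord0 addr0 !addrA. Qed.

Lemma bellAB a b c d g : a = g -> b = g -> c = 0 -> d = 0 -> bell_prod pA pB (Wst (amp4 a b c d)).
Proof. move=> -> -> -> ->; apply: bell_gen; try by []; last by apply: ord4P.
by rewrite -sum1_card big_mkcond /= !big_ord_recl big_ord0. Qed.
Lemma bellAC a b c d g : a = g -> b = 0 -> c = g -> d = 0 -> bell_prod pA pC (Wst (amp4 a b c d)).
Proof. move=> -> -> -> ->; apply: bell_gen; try by []; last by apply: ord4P.
by rewrite -sum1_card big_mkcond /= !big_ord_recl big_ord0. Qed.
Lemma bellAD a b c d g : a = g -> b = 0 -> c = 0 -> d = g -> bell_prod pA pD (Wst (amp4 a b c d)).
Proof. move=> -> -> -> ->; apply: bell_gen; try by []; last by apply: ord4P.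
by rewrite -sum1_card big_mkcond /= !big_ord_recl big_ord0. Qed.
Lemma bellBD a b c d g : a = 0 -> b = g -> c = 0 -> d = g -> bell_prod pB pD (Wst (amp4 a b c d)).
Proof. move=> -> -> -> ->; apply: bell_gen; try by []; last by apply: ord4P.
by rewrite -sum1_card big_mkcond /= !big_ord_recl big_ord0. Qed.


Definition M2 i K1 p1 K2 p2 : locc := Meas i [:: (K1, p1); (K2, p2)].

Lemma valid_M2 G i K1 p1 K2 p2 phi :
  adjmx K1 *m K1 + adjmx K2 *m K2 = 1%:M ->
  valid G p1 (apply_local K1 i phi) -> valid G p2 (apply_local K2 i phi) ->
  valid G (M2 i K1 p1 K2 p2) phi.
Proof. move=> HK H1 H2; split; [rewrite !big_cons big_nil addr0 //|by []]. Qed.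

Lemma value_M2 i K1 p1 K2 p2 phi :
  value (M2 i K1 p1 K2 p2) phi =
  value p1 (apply_local K1 i phi) + value p2 (apply_local K2 i phi).
Proof. by rewrite /= addr0. Qed.

Definition Zm i ed := M2 i (dmx 1 0) (Stop (Some ed)) (dmx 0 1) (Stop None).

Lemma krausZ : adjmx (dmx 1 0) *m dmx 1 0 + adjmx (dmx 0 1) *m dmx 0 1 = 1%:M.
Proof. by apply: kraus2; rewrite ?conjC0 ?conjC1 ?mul0r ?mulr1 ?addr0 ?add0r. Qed.

Lemma krausW m n : m^* * m + n^* * n = 1 ->
  adjmx (dmx m 1) *m dmx m 1 + adjmx (dmx n 0) *m dmx n 0 = 1%:M.
Proof. by move=> H; apply: kraus2; rewrite ?conjC0 ?conjC1 ?mul0r ?mulr1 ?addr0 ?add0r. Qed.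

Lemma krausP s t : s^* * s + t^* * t = 1 ->
  adjmx (dmx 1 s) *m dmx 1 s + adjmx (dmx 0 t) *m dmx 0 t = 1%:M.
Proof. by move=> H; apply: kraus2; rewrite ?conjC0 ?conjC1 ?mul0r ?mulr1 ?addr0 ?add0r. Qed.

Fixpoint fl (s t : algC) (M : nat) : locc :=
  match M with
  | 0 => Stop None
  | M'.+1 =>
    M2 pA (dmx s 1)
      (M2 pB (dmx s 1)
         (M2 pD (dmx s 1) (fl s t M') (dmx t 0) (Stop (Some (pA, pB))))
         (dmx t 0) (M2 pA (dmx 1 s) (Stop (Some (pA, pD))) (dmx 0 t) (Stop None)))
      (dmx t 0) (Stop (Some (pB, pD)))
  end.

Lemma valid_fl s t : s^* * s + t^* * t = 1 ->
  forall M w a b c d, a = w -> b = w -> c = 0 -> d = w ->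
  valid G_VI (fl s t M) (Wst (amp4 a b c d)).
Proof.
move=> Hst; elim => [|M IH] w a b c d -> -> -> ->; first by [].
apply: valid_M2; first exact: krausW.
  rewrite appA; apply: valid_M2; first exact: krausW.
    rewrite appB; apply: valid_M2; first exact: krausW.
      by rewrite appD; apply: (IH (s * (s * w))); ring.
    by rewrite appD; split => //; apply: (bellAB (g := t * (s * w))); ring.
  rewrite appB; apply: valid_M2; first exact: krausP.
    by rewrite appA; split => //; apply: (bellAD (g := s * (t * w))); ring.
  by [].
by rewrite appA; split => //; apply: (bellBD (g := t * w)); ring.
Qed.

Fixpoint VF (R : comNzRingType) (S T : R) (M : nat) (W : R) : R :=
  match M with
  | 0 => 0
  | M'.+1 => VF S T M' (S * S * W) + 4 * S * T * W + 2 * T * W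
  end.

Lemma value_fl s t M : forall w a b c d, a = w -> b = w -> c = 0 -> d = w ->
  value (fl s t M) (Wst (amp4 a b c d)) = VF (`|s| ^+ 2) (`|t| ^+ 2) M (`|w| ^+ 2).
Proof.
elim: M => [|M IH] w a b c d -> -> -> ->; first by [].
rewrite !value_M2 !(appA, appB, appC, appD).
rewrite (IH (s * (s * (1 * w)))) //; try ring.
rewrite /= !norm2_amp4 /= !normrM !normr0 !normr1 !exprMn.
rewrite !expr0n /= !expr1n.
have -> : `|s| ^+ 2 * (`|s| ^+ 2 * (1 * `|w| ^+ 2)) = `|s| ^+ 2 * `|s| ^+ 2 * `|w| ^+ 2 by ring.
ring.
Qed.


Fixpoint cyc (m n s t : algC) (M N : nat) : locc :=
  match N with
  | 0 => Stop None
  | N'.+1 =>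
    M2 pC (dmx m 1)
      (M2 pA (dmx m 1)
        (M2 pB (dmx m 1)
          (M2 pD (dmx m 1) (cyc m n s t M N') (dmx n 0) (Zm pB (pA, pC)))
          (dmx n 0) (Zm pD (pA, pC)))
        (dmx n 0) (Zm pC (pB, pD)))
      (dmx n 0) (fl s t M)
  end.

Lemma valid_cyc m n s t M : m^* * m + n^* * n = 1 -> s^* * s + t^* * t = 1 ->
  forall N w a b c d, a = w -> b = w -> c = w -> d = w ->
  valid G_VI (cyc m n s t M N) (Wst (amp4 a b c d)).
Proof.
move=> Hmn Hst; elim => [|N IH] w a b c d -> -> -> ->; first by [].
apply: valid_M2; first exact: krausW.
  rewrite appC; apply: valid_M2; first exact: krausW.
    rewrite appA; apply: valid_M2; first exact: krausW.
      rewrite appB; apply: valid_M2; first exact: krausW.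
        by rewrite appD; apply: (IH (m * (m * (m * w)))); ring.
      rewrite appD; apply: valid_M2; first exact: krausZ.
        by rewrite appB; split => //; apply: (bellAC (g := n * (m * (m * w)))); ring.
      by [].
    rewrite appB; apply: valid_M2; first exact: krausZ.
      by rewrite appD; split => //; apply: (bellAC (g := n * (m * w))); ring.
    by [].
  rewrite appA; apply: valid_M2; first exact: krausZ.
    by rewrite appC; split => //; apply: (bellBD (g := n * (m * w))); ring.
  by [].
by rewrite appC; apply: (@valid_fl s t Hst M (n * w)); ring.
Qed.

Fixpoint VC (R : comNzRingType) (U Nn S T : R) (M N : nat) (W : R) : R :=
  match N with
  | 0 => 0
  | N'.+1 => VC U Nn S T M N' (U * U * U * W)
             + 2 * Nn * U * U * W + 4 * Nn * U * W + VF S T M (Nn * W)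
  end.

Lemma value_cyc m n s t M N : forall w a b c d, a = w -> b = w -> c = w -> d = w ->
  value (cyc m n s t M N) (Wst (amp4 a b c d)) =
  VC (`|m| ^+ 2) (`|n| ^+ 2) (`|s| ^+ 2) (`|t| ^+ 2) M N (`|w| ^+ 2).
Proof.
elim: N => [|N IH] w a b c d -> -> -> ->; first by [].
rewrite !value_M2 !(appA, appB, appC, appD).
rewrite (IH (m * (m * (m * (1 * w))))) //; try ring.
rewrite (@value_fl s t M (n * w)) //; try ring.
rewrite /= !norm2_amp4 /= !normrM !normr0 !normr1 !exprMn.
rewrite !expr0n /= !expr1n.
have -> : `|m| ^+ 2 * (`|m| ^+ 2 * (`|m| ^+ 2 * (1 * `|w| ^+ 2))) =
  `|m| ^+ 2 * `|m| ^+ 2 * `|m| ^+ 2 * `|w| ^+ 2 by ring.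
ring.
Qed.

Lemma W4_eq : W4 = Wst (amp4 (2^-1) (2^-1) (2^-1) (2^-1)).
Proof.
apply: functional_extensionality => x.
have -> : amp4 (2^-1) (2^-1) (2^-1) (2^-1) = fun _ => 2^-1.
  by apply: functional_extensionality; apply: ord4P.
rewrite /W4; case: (xcase x) => [[k ->]|H].
  rewrite Wst_e (bigD1 k) //= ffunE eqxx big1 // => i /negbTE hi.
  by rewrite ffunE hi.
rewrite Wst_ne //; case: ifP => // /eqP hs; exfalso.
have [k hk] : exists k, x k = o1.
  case: (pickP (fun k => x k == o1)) => [k /eqP hk|hn]; first by exists k.
  move: hs; rewrite big1 // => k _.
  case: (ord2P (x k)) => hx; first by rewrite hx.
  by have := hn k; rewrite /= hx eqxx.
apply: (negP (H k)); rewrite eP hk eqxx /=; apply/forallP => m; apply/implyP => hm.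
have h0 : (\sum_(i < 4 | i != k) x i = 0)%N.
  by move: hs; rewrite (bigD1 k) //= hk /= add1n => /eqP; rewrite eqSS => /eqP.
move: h0; rewrite (bigD1 m) //= => h1.
apply/eqP; apply: val_inj => /=; lia.
Qed.


Lemma bern (x : algR) (n : nat) : 0 <= x -> x <= 1 -> (1 - x) ^+ n * (1 + n%:R * x) <= 1.
Proof.
move=> x0 x1; elim: n => [|n IH]; first by rewrite expr0 mul0r addr0 mulr1.
set P := (1 - x) ^+ n in IH *.
have P0 : 0 <= P by rewrite exprn_ge0 // subr_ge0.
rewrite exprSr -/P -natr1.
have h1 : 0 <= P * (n%:R + 1) * x ^+ 2.
  by rewrite !mulr_ge0 // ?sqr_ge0 // addr_ge0 // ler0n.
nra.
Qed.

Lemma VF_eq (S c : algR) M W : c * (1 + S) = 4 * S + 2 ->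
  VF S (1 - S) M W = c * W * (1 - S ^+ (2 * M)).
Proof.
move=> hc; elim: M W => [|M IH] W /=; first by rewrite muln0 expr0 subrr mulr0.
rewrite IH mulnS exprD expr2.
have -> : 4 * S * (1 - S) * W = c * (1 + S) * (1 - S) * W - 2 * (1 - S) * W by rewrite hc; ring.
ring.
Qed.

Lemma VC_eq (U Nn S T K phi : algR) M N W :
  (forall x, VF S T M x = phi * x) -> Nn = 1 - U ->
  K * (1 - U ^+ 3) = (1 - U) * (2 * U * U + 4 * U + phi) ->
  VC U Nn S T M N W = K * W * (1 - U ^+ (3 * N)).
Proof.
move=> hf hn hk; elim: N W => [|N IH] W /=; first by rewrite muln0 expr0 subrr mulr0.
rewrite IH hf hn mulnS exprD.
apply/eqP; rewrite -subr_eq0; apply/eqP.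
transitivity (W * ((1 - U) * (2 * U * U + 4 * U + phi) - K * (1 - U ^+ 3))); first ring.
by rewrite hk subrr mulr0.
Qed.

Lemma small (y k e : algR) : 0 <= y -> 0 < e -> y * k <= 1 -> 1 < k * e -> y <= e.
Proof. move=> y0 e0 h1 h2; nra. Qed.

Lemma cbounds (S c : algR) : 0 <= S -> S <= 1 -> c * (1 + S) = 4 * S + 2 -> c <= 3 /\ 2 + S <= c.
Proof. move=> S0 S1 hc; split; nra. Qed.

Lemma qbound (Q X y : algR) : 0 <= Q -> Q <= X -> X * (1 + y) <= 1 -> 0 <= 1 + y -> Q * (1 + y) <= 1.
Proof. move=> Q0 QX hX hy; nra. Qed.

Lemma phibounds (c P d e : algR) : 0 <= P -> P <= 1 -> c <= 3 -> 3 - d <= c -> d <= e -> 2 * P <= e ->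
  c * (1 - P) <= 3 /\ 3 - e - 3 * e / 2 <= c * (1 - P).
Proof. move=> P0 P1 c3 c2 de Pe; split; nra. Qed.

Lemma final_ineq (r phi Q e : algR) : 0 <= r -> r <= 2 -> phi <= 3 -> 3 - e - 3 * e / 2 <= phi ->
  0 <= Q -> 6 * Q <= e -> 0 < e ->
  (3 + r) / 6 - e <= 2 * (r + phi) / 3 * (1 / 4) * (1 - Q).
Proof.
move=> r0 r2 p3 pl Q0 Qe e0.
have hQr : Q * (r + phi) <= 6 * Q by nra.
nra.
Qed.

Lemma smallP (P k e : algR) : 0 <= P -> 0 < e -> 0 <= k -> P * (1 + 2 * k) <= 1 -> 1 < k * e -> 2 * P <= e.
Proof. move=> P0 e0 k0 h1 h2; apply: (small (k := k)) => //; [nra|nra]. Qed.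

Lemma smallQ (P k e : algR) : 0 <= P -> 0 < e -> 0 <= k -> P * (1 + 6 * k) <= 1 -> 1 < k * e -> 6 * P <= e.
Proof. move=> P0 e0 k0 h1 h2; apply: (small (k := k)) => //; [nra|nra]. Qed.

Lemma smalld (d k e : algR) : 0 < d -> 0 < e -> 0 <= k -> d * (k + 2) = 1 -> 1 < k * e -> d <= e.
Proof. move=> P0 e0 k0 h1 h2; apply: (small (k := k)) => //; [lra|nra]. Qed.

Definition Uq : algR := (Num.sqrt 3 - 1) / 2.

Lemma main_R (e : algR) : 0 < e -> exists (d : algR) (M N : nat),
  0 < d /\ d < 1 /\
  (3 + Num.sqrt 3) / 6 - e <= VC Uq (1 - Uq) (1 - d) d M N (1 / 4).
Proof.
move=> e0.
have r0 := sqrtr_ge0 (3 : algR).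
have r2 : Num.sqrt (3 : algR) ^+ 2 = 3 by rewrite sqr_sqrtr // ler0n.
rewrite /Uq; move: (Num.sqrt (3 : algR)) r0 r2 => r r0 r2.
have r1 : 1 < r by nra.
have r2' : r < 2 by nra.
have ie0 : 0 <= e^-1 by rewrite invr_ge0 ltW.
have := Num.Theory.archi_boundP ie0.
move: (Num.bound _) => k hk.
have ke : 1 < k%:R * e.
  have : e^-1 * e = 1 by rewrite mulVf // gt_eqF.
  nra.
have k0 : 0 <= (k%:R : algR) by rewrite ler0n.
have [d [dk d0]] : exists d : algR, d * (k%:R + 2) = 1 /\ 0 < d.
  exists ((k + 2)%:R^-1); split; first by rewrite natrD mulVf //; apply/lt0r_neq0; lra.
  by rewrite invr_gt0 ltr0n addn2.
have d1 : d < 1 by nra.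
exists d, ((k + 2) * k)%N, (4 * k)%N.
split => //; split => //.
have [S hS] : exists S : algR, S = 1 - d by eexists.
rewrite -hS.
have S0 : 0 <= S by rewrite hS; lra.
have S1 : S <= 1 by rewrite hS; lra.
have [c hc] : exists c : algR, c * (1 + S) = 4 * S + 2.
  by exists ((4 * S + 2) / (1 + S)); rewrite divfK //; apply/lt0r_neq0; lra.
have [c3 c2] := cbounds S0 S1 hc.
have hP : S ^+ (2 * ((k + 2) * k)) * (1 + 2 * k%:R) <= 1.
  have := bern (2 * ((k + 2) * k)) (ltW d0) (ltW d1).
  rewrite -hS !natrM natrD.
  have -> : 2%:R * ((k%:R + 2%:R) * k%:R) * d = 2 * k%:R * (d * (k%:R + 2)) :> algR by ring.
  by rewrite dk mulr1.
have hf : forall x, VF S d ((k + 2) * k) x = c * (1 - S ^+ (2 * ((k + 2) * k))) * x.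
  move=> x; have := @VF_eq S c ((k + 2) * k) x hc.
  rewrite (_ : 1 - S = d); last by rewrite hS opprB addrC subrK.
  by move=> ->; rewrite mulrAC.
have P0 : 0 <= S ^+ (2 * ((k + 2) * k)) by rewrite exprn_ge0.
have P1 : S ^+ (2 * ((k + 2) * k)) <= 1 by rewrite exprn_ile1.
move: (S ^+ (2 * ((k + 2) * k))) P0 P1 hP hf => P P0 P1 hP hf.
have [U hU] : exists U : algR, U = (r - 1) / 2 by eexists.
rewrite -hU.
have hU2 : 1 + U + U ^+ 2 = 3 / 2.
  rewrite hU; transitivity ((3 + r ^+ 2) / 4); first by field.
  by rewrite r2; field.
have hU3 : 2 * U * U + 4 * U = r.
  rewrite hU; transitivity ((r ^+ 2 - 3) / 2 + r); first by field.
  by rewrite r2; field.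
have U0 : 0 <= U by rewrite hU; lra.
have U12 : U <= 1 / 2 by rewrite hU; lra.
have hK : (2 * (r + c * (1 - P)) / 3) * (1 - U ^+ 3) = (1 - U) * (2 * U * U + 4 * U + c * (1 - P)).
  rewrite (_ : 1 - U ^+ 3 = (1 - U) * (1 + U + U ^+ 2)); last by ring.
  by rewrite hU2 hU3; field.
have hn : 1 - U = 1 - U by [].
rewrite (@VC_eq U (1 - U) S d (2 * (r + c * (1 - P)) / 3) (c * (1 - P)) ((k + 2) * k) (4 * k) (1 / 4) hf hn hK).
have Q0 : 0 <= U ^+ (3 * (4 * k)) by rewrite exprn_ge0.
have hQ : U ^+ (3 * (4 * k)) * (1 + 6 * k%:R) <= 1.
  have hQ' : U ^+ (3 * (4 * k)) <= (1 - 1 / 2) ^+ (3 * (4 * k)).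
    apply: lerXn2r; rewrite ?nnegrE //; lra.
  have := @bern (1 / 2) (3 * (4 * k)) ltac:(lra) ltac:(lra).
  rewrite !natrM.
  have -> : (3%:R * (4%:R * k%:R)) * (1 / 2) = 6 * k%:R :> algR by field.
  by move=> h; apply: (qbound Q0 hQ' h); lra.
move: (U ^+ (3 * (4 * k))) Q0 hQ => Q Q0 hQ.
have hd : d <= e by apply: (smalld d0 e0 k0 dk ke).
have hP2 : 2 * P <= e by apply: (smallP P0 e0 k0 hP ke).
have hQ2 : 6 * Q <= e by apply: (smallQ Q0 e0 k0 hQ ke).
have c2' : 3 - d <= c by rewrite hS in c2; lra.
have [phi3 phil] := phibounds P0 P1 c3 c2' hd hP2.
by apply: final_ineq => //; lra.
Qed.


Lemma VF_map (S T W : algR) M :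
  algRval (VF S T M W) = VF (algRval S) (algRval T) M (algRval W).
Proof.
elim: M W => [|M IH] W /=; first exact: (rmorph0 algRval).
by rewrite /= IH.
Qed.

Lemma VC_map (U Nn S T W : algR) M N :
  algRval (VC U Nn S T M N W) = VC (algRval U) (algRval Nn) (algRval S) (algRval T) M N (algRval W).
Proof.
elim: N W => [|N IH] W /=; first exact: (rmorph0 algRval).
by rewrite /= IH VF_map.
Qed.

Lemma conj_val (x : algR) : (algRval x)^* = algRval x.
Proof. exact: (conj_Creal (algRvalP x)). Qed.

Lemma val_ge0 (x : algR) : 0 <= x -> 0 <= algRval x.
Proof. by []. Qed.

Lemma sq_val (x : algR) : 0 <= x ->
  (algRval (Num.sqrt x))^* * algRval (Num.sqrt x) = algRval x.
Proof. by move=> hx; rewrite conj_val -rmorphM -expr2 sqr_sqrtr. Qed.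

Lemma nsq_val (x : algR) : 0 <= x -> `|algRval (Num.sqrt x)| ^+ 2 = algRval x.
Proof. by move=> hx; rewrite normCKC sq_val. Qed.

Lemma Uq01 : 0 <= Uq /\ Uq <= 1.
Proof.
rewrite /Uq; have r0 := sqrtr_ge0 (3 : algR).
have r2 : Num.sqrt (3 : algR) ^+ 2 = 3 by rewrite sqr_sqrtr // ler0n.
move: (Num.sqrt (3 : algR)) r0 r2 => r r0 r2; split; nra.
Qed.

Theorem mainTheorem4 :
  forall eps : algC, 0 < eps ->
    exists p : locc, valid G_VI p W4 /\
      (3 + sqrtC 3) / 6 - eps <= value p W4.
Proof.
move=> eps he.
pose e := in_algR (gtr0_real he).
have e0 : 0 < e by [].
have [d [M [N [d0 [d1 H]]]]] := main_R e0.
have [U0 U1] := Uq01.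
have U0' : 0 <= 1 - Uq by lra.
have D0 : 0 <= d by lra.
have D1 : 0 <= 1 - d by lra.
exists (cyc (algRval (Num.sqrt Uq)) (algRval (Num.sqrt (1 - Uq)))
            (algRval (Num.sqrt (1 - d))) (algRval (Num.sqrt d)) M N).
rewrite W4_eq; split.
  apply: valid_cyc => //.
    by rewrite !sq_val // -rmorphD addrC subrK rmorph1.
  by rewrite !sq_val // -rmorphD subrK rmorph1.
rewrite (value_cyc _ _ _ _ _ _ (w := 2^-1)) //.
rewrite !nsq_val //.
have -> : `|2^-1 : algC| ^+ 2 = algRval (1 / 4).
  rewrite ger0_norm; last by rewrite invr_ge0 ler0n.
  by rewrite /=; field.
rewrite -VC_map.
have -> : sqrtC 3 = algRval (Num.sqrt 3).
  rewrite -(sqrCK (val_ge0 (sqrtr_ge0 (3 : algR)))); congr sqrtC.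
  by rewrite -rmorphXn sqr_sqrtr ?ler0n // rmorph_nat.
have -> : eps = algRval e by [].
have -> : (3 + algRval (Num.sqrt 3)) / 6 - algRval e = algRval ((3 + Num.sqrt 3) / 6 - e).
  by rewrite rmorphB fmorph_div rmorphD !rmorph_nat.
exact: H.
Qed.
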